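(* Let $A\in\mathbf{R}^{n\times n}$, $C_j\in\mathbf{R}^{m_j\times n}$ ($j=1,\ldots,N$), $H\in\mathbf{R}^{p\times n}$, and let $\mathcal{L}$ be the Laplacian of a directed graph $\mathbf{G}$ on $N$ nodes which has a spanning tree with root node $i$. Set $\bar A=I_N\otimes A$, $\bar C=\mathrm{diag}[C_1,\ldots,C_N]$, $\bar H=\mathcal{L}\otimes H$. Suppose $(C_i,A)$ is detectable and $\mathcal{O}_H\cap\mathcal{C}_j=\{0\}$ for all $j=1,\ldots,N$, where $\mathcal{C}_j$ is the undetectable subspace of $(C_j,A)$ and $\mathcal{O}_H=\bigcap_{l=1}^n\operatorname{Ker}(HA^{l-1})$. Then the pair $\left(\begin{bmatrix}\bar C\\ \bar H\end{bmatrix},\bar A\right)$ is detectable.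
   Context: Directed graph on $\{1,\ldots,N\}$ without self-loops; adjacency matrix $\mathbf{A}=[\mathbf{a}_{kl}]$ with $\mathbf{a}_{kl}=1$ if there is an edge from $l$ to $k$, else $0$; $p_k$ the in-degree of node $k$; Laplacian $\mathcal{L}=\mathrm{diag}[p_1,\ldots,p_N]-\mathbf{A}$. A spanning tree rooted at $i$ is a directed tree containing all nodes in which every node is reachable from $i$ by a directed path. For a square matrix $F$ with minimal polynomial $\alpha_F=\alpha_F^-\alpha_F^+$ (zeros of $\alpha_F^-$ in the open left half-plane, of $\alpha_F^+$ in the closed right half-plane), the undetectable subspace of $(G,F)$ is $\bigcap_{l=1}^n\operatorname{Ker}(GF^{l-1})\cap\operatorname{Ker}\alpha_F^+(F)$; the pair is detectable iff this subspace is $\{0\}$. *)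

(* Defs.v *)
From HB Require Import structures.
From mathcomp Require Import all_boot all_order all_algebra.
From mathcomp Require Import reals.
From mathcomp Require Import complex.
Set Implicit Arguments. Unset Strict Implicit. Unset Printing Implicit Defensive.
Import Order.TTheory GRing.Theory Num.Theory.
Local Open Scope ring_scope.

Section Defs.
Variable R : realType.

Definition peval (K : nzRingType) n (F : 'M[K]_n) (q : {poly K}) : 'M[K]_n :=
  \sum_(k < size q) q`_k *: F ^+ k.

(** Minimal polynomial of a square matrix of arbitrary size
    (mathcomp's [mxminpoly] for positive size; [1] for the empty matrix). *)
Definition minpoly (K : fieldType) n : 'M[K]_n -> {poly K} :=
  match n return 'M[K]_n -> {poly K} with
  | 0 => fun _ => 1
  | n'.+1 => fun F => mxminpoly F
  end.

Definition cplx_mx m n (M : 'M[R]_(m, n)) : 'M[R[i]]_(m, n) :=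
  map_mx (fun r => (r%:C)%C) M.

(** Multiset of complex roots of the minimal polynomial of F
    (so that alpha_F = lead_coef * prod (X - z)). *)
Definition minpoly_roots n (F : 'M[R]_n) : seq R[i] :=
  proj1_sig (closed_field_poly_normal (map_poly (fun r => (r%:C)%C) (minpoly F))).

Definition alpha_plus n (F : 'M[R]_n) : {poly R[i]} :=
  \prod_(z <- minpoly_roots F | 0 <= Re z) ('X - z%:P).

(** Undetectable subspace of (G,F), as a predicate on real vectors:
    intersection of Ker (G F^(l-1)), l = 1..n, with Ker alpha_F^+(F). *)
Definition undetectable m n (G : 'M[R]_(m, n)) (F : 'M[R]_n) (x : 'cV[R]_n) : Prop :=
  (forall l : 'I_n, G *m F ^+ l *m x = 0) /\
  peval (cplx_mx F) (alpha_plus F) *m cplx_mx x = 0.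

Definition detectable m n (G : 'M[R]_(m, n)) (F : 'M[R]_n) : Prop :=
  forall x, undetectable G F x -> x = 0.

Definition unobservable p n (H : 'M[R]_(p, n)) (A : 'M[R]_n) (x : 'cV[R]_n) : Prop :=
  forall l : 'I_n, H *m A ^+ l *m x = 0.

End Defs.

(** Directed graphs on 'I_N: [e l k] means there is an edge from l to k. *)
Definition no_self_loops N (e : rel 'I_N) := forall k, ~~ e k k.

Definition adjacency (K : nzRingType) N (e : rel 'I_N) : 'M[K]_N :=
  \matrix_(k, l) (e l k)%:R.

Definition indeg N (e : rel 'I_N) (k : 'I_N) : nat := #|[set l | e l k]|.

Definition laplacian (K : nzRingType) N (e : rel 'I_N) : 'M[K]_N :=
  diag_mx (\row_k (indeg e k)%:R) - adjacency K e.

Definition has_spanning_tree_rooted N (e : rel 'I_N) (i : 'I_N) : Prop :=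
  exists t : rel 'I_N,
    (forall l k, t l k -> e l k) /\
    #|[set l | t l i]| = 0 /\
    (forall k, k != i -> #|[set l | t l k]| = 1) /\
    (forall k, connect t i k).

Definition blockdiag_const (K : nzRingType) N n (A : 'M[K]_n) :
  'M[K]_(\sum_(j < N) n) := \mxdiag_(j < N) A.

Definition blockdiag (K : nzRingType) N (m : 'I_N -> nat) n
  (C : forall j : 'I_N, 'M[K]_(m j, n)) :
  'M[K]_(\sum_(j < N) m j, \sum_(j < N) n) :=
  \mxblock_(j < N, k < N) (if j == k then C j else 0).

Definition kron (K : nzRingType) N p n (L : 'M[K]_N) (H : 'M[K]_(p, n)) :
  'M[K]_(\sum_(j < N) p, \sum_(k < N) n) :=
  \mxblock_(j < N, k < N) (L j k *: H).

(* Main.v *)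
Require Import Defs.
From HB Require Import structures.
From mathcomp Require Import all_boot all_order all_algebra.
From mathcomp Require Import reals complex.
Import Order.TTheory GRing.Theory Num.Theory.
Local Open Scope ring_scope.

Lemma mxcolZ (K : pzRingType) N n m (a : K) (X : 'I_N -> 'M[K]_(n, m)) :
  \mxcol_j (a *: X j) = a *: \mxcol_j X j.
Proof. by apply/matrixP => r c; rewrite !mxE. Qed.

Lemma diag_pow_col (K : pzRingType) N n m (D : 'M[K]_n) (X : 'I_N -> 'M[K]_(n, m)) k :
  (\mxdiag_(j < N) D) ^+ k *m \mxcol_j X j = \mxcol_j (D ^+ k *m X j).
Proof.
elim: k => [|k IH].
  by rewrite !expr0 mul1mx; apply: eq_mxcol => j; rewrite mul1mx.
rewrite exprS -mulmxE -mulmxA IH mul_mxdiag_mxcol.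
by apply: eq_mxcol => j; rewrite exprS -mulmxE mulmxA.
Qed.

Lemma diag_peval_col (K : nzRingType) N n m (D : 'M[K]_n) q (X : 'I_N -> 'M[K]_(n, m)) :
  peval (\mxdiag_(j < N) D) q *m \mxcol_j X j = \mxcol_j (peval D q *m X j).
Proof.
rewrite /peval mulmx_suml.
rewrite (eq_bigr (fun k : 'I_(size q) => \mxcol_j (q`_k *: (D ^+ k *m X j)))); last first.
  by move=> k _; rewrite -scalemxAl diag_pow_col mxcolZ.
rewrite -mxcol_sum; apply: eq_mxcol => j.
by rewrite mulmx_suml; apply: eq_bigr => k _; rewrite scalemxAl.
Qed.

Lemma blockdiag_col (K : nzRingType) N (m : 'I_N -> nat) n r
  (C : forall j : 'I_N, 'M[K]_(m j, n)) (X : 'I_N -> 'M[K]_(n, r)) :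
  blockdiag C *m \mxcol_j X j = \mxcol_j (C j *m X j).
Proof.
rewrite /blockdiag mul_mxblock_mxrow; apply: eq_mxcol => j.
rewrite (bigD1 j) //= eqxx big1 ?addr0 // => k /negbTE.
by rewrite eq_sym => ->; rewrite mul0mx.
Qed.

Lemma kron_col (K : nzRingType) N p n r (L : 'M[K]_N) (H : 'M[K]_(p, n))
   (X : 'I_N -> 'M[K]_(n, r)) :
  kron L H *m \mxcol_j X j = \mxcol_j (\sum_k L j k *: (H *m X k)).
Proof.
rewrite /kron mul_mxblock_mxrow; apply: eq_mxcol => j.
by apply: eq_bigr => k _; rewrite scalemxAl.
Qed.

Lemma peval_horner (K : comNzRingType) k (F : 'M[K]_k.+1) q :
  horner_mx F q = peval F q.
Proof.
rewrite /peval -{1}[q]coefK poly_def rmorph_sum /=.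
apply: eq_bigr => i _; rewrite linearZ /= rmorphXn /= horner_mx_X //.
Qed.

Lemma minpoly_spec (K : fieldType) k (F : 'M[K]_k) q :
  (minpoly F %| q) = (peval F q == 0).
Proof.
case: k F => [|k] F /=.
  by rewrite dvd1p; apply/esym/eqP; apply: flatmx0.
by rewrite -peval_horner; apply/mxminpoly_minP/eqP.
Qed.

Lemma minpoly_monic (K : fieldType) k (F : 'M[K]_k) : minpoly F \is monic.
Proof. case: k F => [|k] F /=; [exact: monic1 | exact: mxminpoly_monic]. Qed.

Lemma peval_diag0 (K : fieldType) N n (D : 'M[K]_n) q (j0 : 'I_N) :
  (peval (\mxdiag_(j < N) D) q == 0) = (peval D q == 0).
Proof.
apply/eqP/eqP => H.
  have := congr1 (fun M => submxcol M j0)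
     (@diag_peval_col _ N n n D q (fun k => if k == j0 then (1%:M : 'M[K]_n) else 0)).
  by rewrite mxcolK H mul0mx submxcol0 eqxx mulmx1 => <-.
rewrite -[peval _ q]mulmx1 -(submxcolK (1%:M : 'M[K]_(\sum_(j<N) n))).
rewrite diag_peval_col H.
by under eq_mxcol do rewrite mul0mx; rewrite mxcol0.
Qed.

Lemma minpoly_diag (K : fieldType) N n (D : 'M[K]_n) (j0 : 'I_N) :
  minpoly (\mxdiag_(j < N) D) = minpoly D.
Proof.
apply/eqP; rewrite -eqp_monic ?minpoly_monic //; apply/andP; split.
  by rewrite minpoly_spec (@peval_diag0 _ N n D _ j0) -minpoly_spec dvdpp.
by rewrite minpoly_spec -(@peval_diag0 _ N n D _ j0) -minpoly_spec dvdpp.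
Qed.
Lemma lap_row (R : realType) N (e : rel 'I_N) (w : 'I_N -> R) j :
  \sum_k laplacian R e j k * w k = \sum_k (e k j)%:R * (w j - w k).
Proof.
rewrite /laplacian /adjacency.
under eq_bigr do rewrite !mxE mulrBl.
rewrite sumrB (bigD1 j) //= eqxx mulr1n big1 ?addr0; last first.
  by move=> k /negbTE; rewrite eq_sym => ->; rewrite mulr0n mul0r.
under [RHS]eq_bigr do rewrite mulrBr.
rewrite sumrB -mulr_suml; congr (_ * _ - _).
rewrite /indeg -sum1_card natr_sum.
rewrite big_mkcond; apply: eq_bigr => k _; rewrite inE; by case: (e k j).
Qed.

Lemma lap_max (R : realType) N (e : rel 'I_N) (i : 'I_N) (w : 'I_N -> R) :
  (forall k, connect e i k) ->
  (forall j, \sum_k laplacian R e j k * w k = 0) -> forall k, w k <= w i.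
Proof.
move=> conn Lw.
case: (@arg_maxP _ _ 'I_N i predT w isT) => k0 _ Hmax.
have step : forall x y, e x y -> w y = w k0 -> w x = w k0.
  move=> x y exy wy.
  have := Lw y; rewrite lap_row => /eqP; rewrite psumr_eq0; last first.
    by move=> k _; apply: mulr_ge0; [exact: ler0n | rewrite subr_ge0 wy; exact: Hmax].
  move/allP/(_ x (mem_index_enum _)). rewrite exy /= mul1r subr_eq0 => /eqP <-; exact: wy.
have back : forall p x, path e x p -> w (last x p) = w k0 -> w x = w k0.
  elim=> [|y p IH] x //= /andP[exy pth] wl.
  by apply: step exy (IH _ pth wl).
have := conn k0; case/connectP => p pth lst.
have wi := back p i pth (esym (congr1 w lst)).
by move=> k; rewrite wi; exact: Hmax.
Qed.

Lemma cplx_diag (R : realType) N n (A : 'M[R]_n) :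
  cplx_mx (\mxdiag_(j < N) A) = \mxdiag_(j < N) cplx_mx A.
Proof.
apply/matrixP => r c; rewrite !mxE; case: eqP => _; rewrite ?conform_mx_id !mxE //.
Qed.

Lemma submxcol_cplx (R : realType) N n (x : 'cV[R]_(\sum_(j < N) n)) j :
  submxcol (cplx_mx x) j = cplx_mx (submxcol x j).
Proof. by apply/matrixP => r c; rewrite !mxE. Qed.

Lemma alpha_eq (R : realType) k1 k2 (F1 : 'M[R]_k1) (F2 : 'M[R]_k2) :
  minpoly F1 = minpoly F2 -> alpha_plus F1 = alpha_plus F2.
Proof. by rewrite /alpha_plus /minpoly_roots => ->. Qed.

Theorem corollary2 (R : realType) (n N p : nat) (m : 'I_N -> nat)
  (A : 'M[R]_n) (C : forall j : 'I_N, 'M[R]_(m j, n)) (H : 'M[R]_(p, n))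
  (e : rel 'I_N) (i : 'I_N) :
  no_self_loops e ->
  has_spanning_tree_rooted e i ->
  detectable (C i) A ->
  (forall j : 'I_N, forall x : 'cV[R]_n,
      unobservable H A x -> undetectable (C j) A x -> x = 0) ->
  detectable
    (col_mx (blockdiag C) (kron (laplacian R e) H))
    (blockdiag_const N A).
Proof.
move=> _ [t [Hte [_ [_ Htc]]]] detCi Hjo x [Hobs Hpe].
have conn : forall k, connect e i k.
  move=> k; apply: (connect_sub _ (Htc k)) => a b tab; apply: connect1; exact: Hte.
pose X j := submxcol x j.
have le_n : (n <= \sum_(j < N) n)%N by rewrite (bigD1 i) //= leq_addr.
have F1 : forall l : 'I_n, forall j,
    C j *m A ^+ l *m X j = 0 /\
    \sum_k laplacian R e j k *: (H *m A ^+ l *m X k) = 0.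
  move=> l j; have := Hobs (widen_ord le_n l).
  rewrite /= !mul_col_mx => /eqP; rewrite col_mx_eq0 => /andP[/eqP h1 /eqP h2].
  move: h1 h2; rewrite -!mulmxA -[x]submxcolK /blockdiag_const !diag_pow_col.
  rewrite blockdiag_col kron_col => h1 h2; split.
    by have := congr1 (fun M => submxcol M j) h1; rewrite mxcolK submxcol0 mulmxA.
  have := congr1 (fun M => submxcol M j) h2; rewrite mxcolK submxcol0 => h.
  by apply: etrans h; apply: eq_bigr => k _; rewrite mulmxA.
have F2 : forall j, peval (cplx_mx A) (alpha_plus A) *m cplx_mx (X j) = 0.
  move=> j; move: Hpe; rewrite /blockdiag_const cplx_diag.
  rewrite (@alpha_eq _ _ _ _ _ (@minpoly_diag _ N n A i)) -[cplx_mx x]submxcolK diag_peval_col.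
  move/(congr1 (fun M => submxcol M j)); rewrite mxcolK submxcol0 submxcol_cplx.
  by [].
have Hund : forall j, undetectable (C j) A (X j).
  by move=> j; split => [l|]; [case: (F1 l j) | exact: F2].
have Xi : X i = 0 by apply: detCi.
have Hunobs : forall k, unobservable H A (X k).
  move=> k l; apply/matrixP => r c; rewrite [c]ord1 [in RHS]mxE.
  pose w k := (H *m A ^+ l *m X k) r 0.
  have Lw : forall j, \sum_k laplacian R e j k * w k = 0.
    move=> j; have := congr1 (fun M : 'M[R]_(p,1) => M r 0) (proj2 (F1 l j)).
    rewrite summxE mxE => h; apply: etrans h; apply: eq_bigr => k' _. by rewrite /w [in RHS]mxE.
  have Lw' : forall j, \sum_k laplacian R e j k * (- w k) = 0.
    by move=> j; under eq_bigr do rewrite mulrN; rewrite sumrN Lw oppr0.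
  have wi : w i = 0 by rewrite /w Xi mulmx0 mxE.
  have h1 := @lap_max R N e i w conn Lw k; have h2 := @lap_max R N e i (fun k => - w k) conn Lw' k.
  rewrite wi in h1; rewrite wi oppr0 oppr_le0 in h2.
  by change (w k = 0); apply/eqP; rewrite eq_le h1 h2.
rewrite -[x]submxcolK; under eq_mxcol => j do rewrite -/(X j) (Hjo j _ (Hunobs j) (Hund j)).
by rewrite mxcol0.
Qed.
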